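(* Let $A$ be an atom and $\mathcal{H}_{pos}$ a finite set of atoms such that $\mathrm{Var}(\{A\}\cup\mathcal{H}_{pos})\cap\mathcal{U}=\emptyset$ and $A$ unifies with every $B\in\mathcal{H}_{pos}$. In the algorithm MUS on $A,\mathcal{H}_{pos}$, the loop of step (2) always terminates, and the following statement is an invariant of this loop: for each $A'\in\{A\}\cup\mathcal{H}_{pos}$ there exist $B\in\mathcal{B}$ and a substitution $\theta$ such that $A'\theta=B\theta$ and $\mathrm{Var}(\mathcal{B})\cap\mathrm{Dom}(\theta)=\emptyset$.
   Context: $\mathcal{U}$ is a fixed infinite set of special fresh variables. Disagreement pair: for atoms (or terms) $s,t$, subterms $s'$ of $s$ and $t'$ of $t$ occurring at the same position form a disagreement pair if the root symbols of $s'$ and $t'$ differ while all symbols on the path from that position up to the root coincide in $s$ and $t$; a disagreement pair occurs in a set of atoms $\mathcal{B}$ if it is a disagreement pair of two atoms of $\mathcal{B}$. A disagreement pair $t,t'$ is simple if one of the terms is a variable not occurring in the other and no variable of $\mathcal{U}$ occurs in $t,t'$. Algorithm MUS: (1) $\mathcal{B}:=\{A\}\cup\mathcal{H}_{pos}$. (2) While simple disagreement pairs occur in $\mathcal{B}$: nondeterministically choose a simple disagreement pair $X,t$ (or $t,X$), $X$ a variable, such that there is no other simple disagreement pair $X,t'$ (or $t',X$) in $\mathcal{B}$ with $t'$ a strict instance of $t$; set $\mathcal{B}:=\mathcal{B}\{X/t\}$. (3) While $|\mathcal{B}|\neq 1$: nondeterministically choose a disagreement pair $t,t'$ in $\mathcal{B}$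 and replace all occurrences of the disagreement pair $t,t'$ in $\mathcal{B}$ by one fresh variable of $\mathcal{U}$. (4) With $\mathcal{B}=\{B\}$, return $\theta$ with $A\theta=B$ and $\mathrm{Dom}(\theta)\subseteq\mathrm{Var}(A)$. *)

(* Defs.v *)
From Stdlib Require Import List Arith Relations.
Import ListNotations.

Inductive term : Type :=
| Var : nat -> term
| Fn : nat -> list term -> term.

Inductive atom : Type :=
| Atom : nat -> list term -> atom.

Definition atom_term (a : atom) : term :=
  match a with Atom p args => Fn p args end.

(** Root symbol of a term; a function symbol is identified together with its arity. *)
Inductive sym : Type :=
| SVar : nat -> sym
| SFn : nat -> nat -> sym.

Definition root (t : term) : sym :=
  match t with
  | Var x => SVar x
  | Fn f args => SFn f (length args)
  end.

Fixpoint subterm_at (t : term) (p : list nat) : option term :=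
  match p with
  | [] => Some t
  | i :: p' =>
      match t with
      | Var _ => None
      | Fn _ args =>
          match nth_error args i with
          | Some u => subterm_at u p'
          | None => None
          end
      end
  end.

Definition disagreement_pair (s t s' t' : term) : Prop :=
  exists p : list nat,
    subterm_at s p = Some s' /\ subterm_at t p = Some t' /\
    root s' <> root t' /\
    (forall q r, q ++ r = p -> r <> [] ->
       option_map root (subterm_at s q) = option_map root (subterm_at t q)).

Definition dp_in (B : list atom) (t t' : term) : Prop :=
  exists a1 a2, In a1 B /\ In a2 B /\
    disagreement_pair (atom_term a1) (atom_term a2) t t'.

Inductive occurs (x : nat) : term -> Prop :=
| occurs_var : occurs x (Var x)
| occurs_fn : forall f args u, In u args -> occurs x u -> occurs x (Fn f args).

Definition occurs_atom (x : nat) (a : atom) : Prop := occurs x (atom_term a).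

Definition occurs_set (x : nat) (B : list atom) : Prop :=
  exists a, In a B /\ occurs_atom x a.

Definition substitution := nat -> term.

Fixpoint subst (s : substitution) (t : term) : term :=
  match t with
  | Var x => s x
  | Fn f args => Fn f (map (subst s) args)
  end.

Definition subst_atom (s : substitution) (a : atom) : atom :=
  match a with Atom p args => Atom p (map (subst s) args) end.

Definition in_dom (s : substitution) (x : nat) : Prop := s x <> Var x.

Definition finite_dom (s : substitution) : Prop :=
  exists l : list nat, forall x, in_dom s x -> In x l.

Definition single (X : nat) (t : term) : substitution :=
  fun y => if Nat.eqb y X then t else Var y.

Definition unifiable (a b : atom) : Prop :=
  exists s, finite_dom s /\ subst_atom s a = subst_atom s b.

Definition instance_of (t' t : term) : Prop :=
  exists s, finite_dom s /\ subst s t = t'.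

Definition strict_instance (t' t : term) : Prop :=
  instance_of t' t /\ ~ instance_of t t'.

Definition simple_dp_in (U : nat -> Prop) (B : list atom) (t t' : term) : Prop :=
  dp_in B t t' /\
  ((exists X, t = Var X /\ ~ occurs X t') \/ (exists X, t' = Var X /\ ~ occurs X t)) /\
  (forall x, U x -> ~ occurs x t /\ ~ occurs x t').

Definition mus_step2 (U : nat -> Prop) (B B' : list atom) : Prop :=
  exists (X : nat) (t : term),
    (simple_dp_in U B (Var X) t \/ simple_dp_in U B t (Var X)) /\
    (forall t', (simple_dp_in U B (Var X) t' \/ simple_dp_in U B t' (Var X)) ->
                ~ strict_instance t' t) /\
    B' = map (subst_atom (single X t)) B.

Definition infinite_set (U : nat -> Prop) : Prop :=
  forall n, exists x, n <= x /\ U x.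

Definition mus_invariant (A : atom) (H B : list atom) : Prop :=
  forall A', In A' (A :: H) ->
    exists Bt theta, In Bt B /\ finite_dom theta /\
      subst_atom theta A' = subst_atom theta Bt /\
      (forall x, occurs_set x B -> ~ in_dom theta x).

(* Main.v *)
Require Import Defs.
From Stdlib Require Import List Arith Relations Classical Lia.
Import ListNotations.

Fixpoint term_ind' (P : term -> Prop) (Hv : forall x, P (Var x))
  (Hf : forall f l, Forall P l -> P (Fn f l)) (t : term) : P t :=
  match t with
  | Var x => Hv x
  | Fn f l => Hf f l ((fix go (l : list term) : Forall P l :=
      match l with [] => Forall_nil _ | u :: l' => Forall_cons _ (term_ind' P Hv Hf u) (go l') end) l)
  end.

Lemma occurs_subst s u y : occurs y (subst s u) -> exists z, occurs z u /\ occurs y (s z).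
Proof.
  induction u as [x|f l IH] using term_ind'; simpl; intros Ho.
  - exists x; split; [constructor|exact Ho].
  - inversion Ho; subst. apply in_map_iff in H1 as [v [<- Hv]].
    rewrite Forall_forall in IH. destruct (IH v Hv H2) as [z [Hz1 Hz2]].
    exists z; split; [econstructor; eauto|exact Hz2].
Qed.

Lemma subst_ext s1 s2 u : (forall z, occurs z u -> s1 z = s2 z) -> subst s1 u = subst s2 u.
Proof.
  induction u as [x|f l IH] using term_ind'; simpl; intros He.
  - apply He; constructor.
  - f_equal. apply map_ext_in. intros v Hv. rewrite Forall_forall in IH.
    apply IH; auto. intros z Hz; apply He; econstructor; eauto.
Qed.

Lemma subst_comp s1 s2 u : subst s2 (subst s1 u) = subst (fun z => subst s2 (s1 z)) u.
Proof.
  induction u as [x|f l IH] using term_ind'; simpl; auto.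
  f_equal. rewrite map_map. apply map_ext_in. intros v Hv.
  rewrite Forall_forall in IH; auto.
Qed.

Lemma subst_id u : subst Var u = u.
Proof.
  induction u as [x|f l IH] using term_ind'; simpl; auto.
  f_equal. rewrite Forall_forall in IH. rewrite <- (map_id l) at 2.
  apply map_ext_in; auto.
Qed.

Lemma subterm_occurs u p v x : subterm_at u p = Some v -> occurs x v -> occurs x u.
Proof.
  revert u; induction p as [|i p IH]; simpl; intros u Hs Ho.
  - inversion Hs; subst; auto.
  - destruct u as [y|f l]; [discriminate|].
    destruct (nth_error l i) eqn:E; [|discriminate].
    econstructor; [eapply nth_error_In; eauto| eapply IH; eauto].
Qed.

Lemma atom_term_subst s a : atom_term (subst_atom s a) = subst s (atom_term a).
Proof. destruct a; reflexivity. Qed.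

Lemma subst_atom_eq s1 s2 a b :
  subst_atom s1 a = subst_atom s2 b <-> subst s1 (atom_term a) = subst s2 (atom_term b).
Proof.
  destruct a, b; simpl; split; intro E; inversion E; reflexivity.
Qed.

Lemma dp_occurs B t t' x : dp_in B t t' ->
  (occurs x t -> occurs_set x B) /\ (occurs x t' -> occurs_set x B).
Proof.
  intros (a1 & a2 & H1 & H2 & p & S1 & S2 & _).
  split; intro Ho; [exists a1 | exists a2]; split; auto; unfold occurs_atom;
    eapply subterm_occurs; eauto.
Qed.

Lemma step_facts U B B' : mus_step2 U B B' -> exists X t,
  occurs_set X B /\ (forall y, occurs y t -> occurs_set y B) /\ ~ occurs X t /\
  B' = map (subst_atom (single X t)) B.
Proof.
  intros (X & t & Hs & _ & HB). exists X, t.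
  assert (Hc : ~ occurs X t).
  { destruct Hs as [(Hd & Hv & _)|(Hd & Hv & _)];
    destruct Hv as [(Y & E & Hn)|(Y & E & Hn)].
    - inversion E; subst; auto.
    - subst t. intro Ho; apply Hn. inversion Ho; subst; constructor.
    - subst t. intro Ho; apply Hn. inversion Ho; subst; constructor.
    - inversion E; subst; auto. }
  destruct Hs as [(Hd & _ & _)|(Hd & _ & _)].
  - repeat split; auto.
    + apply (proj1 (dp_occurs _ _ _ X Hd)); constructor.
    + intros y Hy; apply (proj2 (dp_occurs _ _ _ y Hd)); auto.
  - repeat split; auto.
    + apply (proj2 (dp_occurs _ _ _ X Hd)); constructor.
    + intros y Hy; apply (proj1 (dp_occurs _ _ _ y Hd)); auto.
Qed.

Lemma vars_after B X t x :
  (forall y, occurs y t -> occurs_set y B) -> ~ occurs X t ->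
  occurs_set x (map (subst_atom (single X t)) B) -> occurs_set x B /\ x <> X.
Proof.
  intros Ht HX (a' & Ha' & Ho).
  apply in_map_iff in Ha' as [a [<- Ha]].
  unfold occurs_atom in Ho. rewrite atom_term_subst in Ho.
  apply occurs_subst in Ho as [z [Hz Hxz]]. unfold single in Hxz.
  destruct (Nat.eqb z X) eqn:E.
  - apply Nat.eqb_eq in E; subst z. split; auto.
    intro; subst; auto.
  - inversion Hxz; subst. split.
    + exists a; split; auto.
    + intro; subst. rewrite Nat.eqb_refl in E; discriminate.
Qed.

Lemma acc_aux U n : forall V, length V <= n -> forall B,
  (forall x, occurs_set x B -> In x V) -> Acc (fun B' B => mus_step2 U B B') B.
Proof.
  induction n; intros V HV B HB; constructor; intros B' Hst;
  destruct (step_facts _ _ _ Hst) as (X & t & HX & Ht & Hn & ->).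
  - destruct V; [apply HB in HX; destruct HX | simpl in HV; lia].
  - apply (IHn (remove Nat.eq_dec X V)).
    + pose proof (remove_length_lt Nat.eq_dec V X (HB _ HX)). lia.
    + intros x Hx. destruct (vars_after _ _ _ _ Ht Hn Hx) as [H1 H2].
      apply in_in_remove; auto.
Qed.

Lemma not_dom s x : ~ in_dom s x -> s x = Var x.
Proof. unfold in_dom; intro H; apply NNPP; auto. Qed.

Lemma inv_step A H B B' U : mus_step2 U B B' -> mus_invariant A H B -> mus_invariant A H B'.
Proof.
  intros Hst Hinv A' HA'.
  destruct (step_facts _ _ _ Hst) as (X & t & HX & Ht & Hn & ->).
  destruct (Hinv A' HA') as (Bt & th & HBt & [l Hl] & Heq & Hd).
  set (sg := single X t).
  set (th' := fun y => subst sg (th y)).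
  assert (HtX : forall y, occurs y t -> y <> X) by (intros y Hy E; subst; auto).
  assert (Hth : forall y, occurs_set y B -> th y = Var y) by (intros; apply not_dom; auto).
  exists (subst_atom sg Bt), th'. repeat split.
  - apply in_map; auto.
  - exists (X :: l). intros y Hy. unfold in_dom, th' in Hy.
    destruct (Nat.eq_dec y X); [left; auto|right; apply Hl].
    intro E. apply Hy. rewrite E. simpl. unfold sg, single.
    destruct (Nat.eqb y X) eqn:E'; auto. apply Nat.eqb_eq in E'; contradiction.
  - apply subst_atom_eq. apply subst_atom_eq in Heq.
    rewrite atom_term_subst, subst_comp.
    unfold th'. rewrite <- (subst_comp th sg), Heq, subst_comp.
    apply subst_ext. intros z Hz.
    assert (Hzb : occurs_set z B) by (exists Bt; split; auto).
    rewrite (Hth z Hzb). simpl. unfold sg, single.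
    destruct (Nat.eqb z X) eqn:E; [|simpl; rewrite Hth; [simpl; rewrite E; auto|auto]].
    rewrite <- subst_comp.
    rewrite (subst_ext th Var t) by (intros; apply Hth; auto).
    rewrite subst_id. symmetry. rewrite <- (subst_id t) at 2. apply subst_ext.
    intros y Hy. destruct (Nat.eqb y X) eqn:E2; auto.
    apply Nat.eqb_eq in E2. exfalso; apply (HtX y); auto.
  - intros x Hx Hdom. destruct (vars_after _ _ _ _ Ht Hn Hx) as [H1 H2].
    apply Hdom. unfold th'. rewrite Hth by auto. simpl. unfold sg, single.
    apply Nat.eqb_neq in H2. rewrite H2. reflexivity.
Qed.

Fixpoint tvars (t : term) : list nat :=
  match t with Var x => [x] | Fn _ l => flat_map tvars l end.

Lemma tvars_ok x t : occurs x t -> In x (tvars t).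
Proof.
  induction 1; simpl; auto. apply in_flat_map; eauto.
Qed.

Lemma fin_vars (B : list atom) : exists V, forall x, occurs_set x B -> In x V.
Proof.
  exists (flat_map (fun a => tvars (atom_term a)) B).
  intros x (a & Ha & Ho). apply in_flat_map. exists a; split; auto. apply tvars_ok; auto.
Qed.

Theorem mainTheorem6 (U : nat -> Prop) (HU : infinite_set U)
  (A : atom) (H : list atom)
  (Hfresh : forall x, occurs_set x (A :: H) -> ~ U x)
  (Hunif : forall B, In B H -> unifiable A B) :
  Acc (fun B' B => mus_step2 U B B') (A :: H) /\
  (forall B, clos_refl_trans _ (mus_step2 U) (A :: H) B -> mus_invariant A H B).
Proof.
  split.
  - destruct (fin_vars (A :: H)) as [W HW].
    eapply (acc_aux U (length W) W); eauto.
  - intros B Hrt. apply clos_rt_rtn1 in Hrt. induction Hrt.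
    + intros A' HA'. exists A', Var. split; [exact HA'|]. split.
      { exists []. intros x Hx; apply Hx; reflexivity. }
      split; [reflexivity|]. intros x _ Hx; apply Hx; reflexivity.
    + eapply inv_step; eauto.
Qed.
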